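(* Let $(F,+,\cdot)$ be a left near-field and let $((K,\boxplus,\boxdot),(K,\cdot))$ be an elementary near-vector space associated with $(F,+,\cdot)$. Then $1\in Q(K)$, so $\boxplus_1:=+_1$ is defined, and there exists a right quasi-multiplicative bijection $\phi:(K,\cdot)\to(F,\cdot)$ such that $\alpha\boxplus_1\beta=\phi^{-1}(\phi(\alpha)+\phi(\beta))$ for all $\alpha,\beta\in K$; moreover $(K,\boxplus_1,\cdot)$ is a left near-field.
   Context: A scalar group is a tuple $(F,\cdot,1,0,-1)$ where $(F,\cdot,1)$ is a monoid, $0\ne1$, $0\alpha=\alpha0=0$, $\{1,-1\}$ is exactly the solution set of $x^2=1$, and $(F\setminus\{0\},\cdot)$ is a group. A left near-field $(F,+,\cdot)$: $(F,+)$ a group with identity $0$, $(F\setminus\{0\},\cdot)$ a group, $0\cdot\alpha=0$, $\gamma(\alpha+\beta)=\gamma\alpha+\gamma\beta$. A (left) near-vector space $((V,\boxplus,\boxdot),(F,\cdot))$: $(F,\cdot)$ scalar group, $(V,\boxplus)$ abelian group, $\boxdot:F\times V\to V$ with $1\boxdot v=v$, $\alpha\boxdot(\beta\boxdot v)=(\alpha\beta)\boxdot v$, $\alpha\boxdot(v\boxplus w)=\alpha\boxdot v\boxplus\alpha\boxdot w$, $(-1)\boxdot v=\boxminus v$, $0\boxdot v=0$, freeness, and quasi-kernel $Q(V)=\{v:\forall\alpha,\beta\,\exists\gamma,\ \alpha\boxdot v\boxplus\beta\boxdot v=\gamma\boxdot v\}$ generating $V$; for $u\in Q(V)\setminus\{0\}$,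 $\alpha+_u\beta$ is the unique $\gamma$ with $\alpha\boxdot u\boxplus\beta\boxdot u=\gamma\boxdot u$. An isomorphism $(\Psi,\varphi)$ of near-vector spaces: additive bijection $\Psi$ and group isomorphism $\varphi$ between the nonzero scalars with $\Psi(\alpha\boxdot_1u)=\varphi(\alpha)\boxdot_2\Psi(u)$. The canonical near-vector space of $(F,+,\cdot)$ is $((F,+,\cdot),(F,\cdot))$. An elementary near-vector space associated with a left near-field $(F,+,\cdot)$ is a near-vector space of the form $((K,\boxplus,\boxdot),(K,\cdot))$ (vectors and scalars on the same set $K$) isomorphic to the canonical near-vector space of $(F,+,\cdot)$. A right quasi-multiplicative bijection $\phi:(K,\cdot)\to(F,\cdot)$ is a bijection of the form $\phi(\alpha)=\varphi(\alpha)\lambda$ with $\varphi$ a multiplicative bijection (bijective monoid morphism) and $\lambda\in F\setminus\{0\}$. *)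

(* Defs.v *)
Definition scalar_group {F : Type} (mul : F -> F -> F) (one zero mone : F) : Prop :=
  (forall a b c, mul a (mul b c) = mul (mul a b) c) /\
  (forall a, mul one a = a /\ mul a one = a) /\
  zero <> one /\
  (forall a, mul zero a = zero /\ mul a zero = zero) /\
  (forall x, mul x x = one <-> (x = one \/ x = mone)) /\
  (forall a b, a <> zero -> b <> zero -> mul a b <> zero) /\
  (forall a, a <> zero -> exists b, b <> zero /\ mul a b = one /\ mul b a = one).

Definition left_near_field {F : Type} (add mul : F -> F -> F) (zero one : F) : Prop :=
  (forall a b c, add a (add b c) = add (add a b) c) /\
  (forall a, add zero a = a /\ add a zero = a) /\
  (forall a, exists b, add a b = zero /\ add b a = zero) /\
  one <> zero /\
  (forall a b, a <> zero -> b <> zero -> mul a b <> zero) /\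
  (forall a b c, a <> zero -> b <> zero -> c <> zero ->
      mul a (mul b c) = mul (mul a b) c) /\
  (forall a, a <> zero -> mul one a = a /\ mul a one = a) /\
  (forall a, a <> zero -> exists b, b <> zero /\ mul a b = one /\ mul b a = one) /\
  (forall a, mul zero a = zero) /\
  (forall a b c, mul c (add a b) = add (mul c a) (mul c b)).

Definition in_Q {V F : Type} (vadd : V -> V -> V) (smul : F -> V -> V) (v : V) : Prop :=
  forall a b : F, exists c : F, vadd (smul a v) (smul b v) = smul c v.

Definition near_vector_space {V F : Type} (vadd : V -> V -> V) (vzero : V)
    (mul : F -> F -> F) (one zero mone : F) (smul : F -> V -> V) : Prop :=
  scalar_group mul one zero mone /\
  (forall u v w, vadd u (vadd v w) = vadd (vadd u v) w) /\
  (forall u v, vadd u v = vadd v u) /\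
  (forall v, vadd vzero v = v) /\
  (forall v, exists w, vadd v w = vzero) /\
  (forall v, smul one v = v) /\
  (forall a b v, smul a (smul b v) = smul (mul a b) v) /\
  (forall a v w, smul a (vadd v w) = vadd (smul a v) (smul a w)) /\
  (forall v, vadd (smul mone v) v = vzero) /\
  (forall v, smul zero v = vzero) /\
  (forall a b v, smul a v = smul b v -> v = vzero \/ a = b) /\
  (* Q(V) generates V as an additive group *)
  (forall S : V -> Prop,
      S vzero ->
      (forall u v, S u -> S v -> S (vadd u v)) ->
      (forall u w, S u -> vadd u w = vzero -> S w) ->
      (forall v, in_Q vadd smul v -> S v) ->
      forall v, S v).

(** (Psi, phi) is an isomorphism of near-vector spaces from
    ((V1,vadd1,smul1),(F1,mul1)) to ((V2,vadd2,smul2),(F2,mul2));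
    phi is only relevant on nonzero scalars. *)
Definition nvs_isomorphism {V1 F1 V2 F2 : Type}
    (vadd1 : V1 -> V1 -> V1) (mul1 : F1 -> F1 -> F1) (zero1 : F1) (smul1 : F1 -> V1 -> V1)
    (vadd2 : V2 -> V2 -> V2) (mul2 : F2 -> F2 -> F2) (zero2 : F2) (smul2 : F2 -> V2 -> V2)
    (Psi : V1 -> V2) (phi : F1 -> F2) : Prop :=
  (forall u v, Psi (vadd1 u v) = vadd2 (Psi u) (Psi v)) /\
  (forall u v, Psi u = Psi v -> u = v) /\
  (forall w, exists u, Psi u = w) /\
  (forall a, a <> zero1 -> phi a <> zero2) /\
  (forall a b, a <> zero1 -> b <> zero1 -> phi (mul1 a b) = mul2 (phi a) (phi b)) /\
  (forall a b, a <> zero1 -> b <> zero1 -> phi a = phi b -> a = b) /\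
  (forall c, c <> zero2 -> exists a, a <> zero1 /\ phi a = c) /\
  (forall a u, a <> zero1 -> Psi (smul1 a u) = smul2 (phi a) (Psi u)).

(** Elementary near-vector space ((K,vadd,smul),(K,mul)) associated with the
    left near-field (F,addF,mulF): a near-vector space isomorphic to the
    canonical near-vector space ((F,addF,mulF),(F,mulF)). *)
Definition elementary_nvs {K F : Type}
    (vadd : K -> K -> K) (vzero : K) (mul : K -> K -> K) (one zero mone : K)
    (smul : K -> K -> K)
    (addF mulF : F -> F -> F) (zeroF : F) : Prop :=
  near_vector_space vadd vzero mul one zero mone smul /\
  exists (Psi : K -> F) (phi : K -> F),
    nvs_isomorphism vadd mul zero smul addF mulF zeroF mulF Psi phi.

Definition right_quasi_mult_bij {K F : Type}
    (mulK : K -> K -> K) (oneK : K) (mulF : F -> F -> F) (zeroF oneF : F)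
    (phi : K -> F) : Prop :=
  (forall a b, phi a = phi b -> a = b) /\ (forall c, exists a, phi a = c) /\
  exists (varphi : K -> F) (lambda : F),
    lambda <> zeroF /\
    (forall a b, varphi a = varphi b -> a = b) /\ (forall c, exists a, varphi a = c) /\
    varphi oneK = oneF /\
    (forall a b, varphi (mulK a b) = mulF (varphi a) (varphi b)) /\
    (forall a, phi a = mulF (varphi a) lambda).

(* Main.v *)
Require Import Defs.
From Stdlib Require Import Classical ClassicalEpsilon.

Section NF.
Variables (F : Type) (addF mulF : F -> F -> F) (zeroF oneF : F).
Hypothesis HF : left_near_field addF mulF zeroF oneF.

Lemma nf_addidem : forall x, addF x x = x -> x = zeroF.
Proof.
  pose proof HF as (Aassoc & Aid & Ainv & H10 & Mnz & Massoc & Mid & Minv & M0 & Dist).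
  intros x E.
  destruct (Ainv x) as [b [Hb1 Hb2]].
  assert (E2 : addF b (addF x x) = addF b x) by (rewrite E; reflexivity).
  rewrite Aassoc, Hb2, (proj1 (Aid x)) in E2. exact E2.
Qed.

Lemma nf_mulx0 : forall x, mulF x zeroF = zeroF.
Proof.
  pose proof HF as (Aassoc & Aid & Ainv & H10 & Mnz & Massoc & Mid & Minv & M0 & Dist).
  intros x. apply nf_addidem. rewrite <- Dist. rewrite (proj1 (Aid zeroF)). reflexivity.
Qed.

Lemma nf_assoc : forall a b c, mulF a (mulF b c) = mulF (mulF a b) c.
Proof.
  pose proof HF as (Aassoc & Aid & Ainv & H10 & Mnz & Massoc & Mid & Minv & M0 & Dist).
  intros a b c.
  destruct (classic (a = zeroF)) as [Ha|Ha]; [subst; rewrite !M0; reflexivity|].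
  destruct (classic (b = zeroF)) as [Hb|Hb]; [subst; rewrite M0, !nf_mulx0, M0; reflexivity|].
  destruct (classic (c = zeroF)) as [Hc|Hc]; [subst; rewrite !nf_mulx0; reflexivity|].
  apply Massoc; assumption.
Qed.

Lemma nf_mul1l : forall a, mulF oneF a = a.
Proof.
  pose proof HF as (Aassoc & Aid & Ainv & H10 & Mnz & Massoc & Mid & Minv & M0 & Dist).
  intros a. destruct (classic (a = zeroF)) as [Ha|Ha].
  - subst; apply nf_mulx0.
  - apply Mid; assumption.
Qed.

Lemma nf_mul1r : forall a, mulF a oneF = a.
Proof.
  pose proof HF as (Aassoc & Aid & Ainv & H10 & Mnz & Massoc & Mid & Minv & M0 & Dist).
  intros a. destruct (classic (a = zeroF)) as [Ha|Ha].
  - subst; apply M0.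
  - apply Mid; assumption.
Qed.

Lemma nf_idem : forall x, x <> zeroF -> mulF x x = x -> x = oneF.
Proof.
  pose proof HF as (Aassoc & Aid & Ainv & H10 & Mnz & Massoc & Mid & Minv & M0 & Dist).
  intros x Hx E. destruct (Minv x Hx) as [y [Hy [Hxy Hyx]]].
  assert (E2 : mulF y (mulF x x) = mulF y x) by (rewrite E; reflexivity).
  rewrite nf_assoc, Hyx, nf_mul1l in E2. exact E2.
Qed.

Lemma nf_rcancel : forall l a b, l <> zeroF -> mulF a l = mulF b l -> a = b.
Proof.
  pose proof HF as (Aassoc & Aid & Ainv & H10 & Mnz & Massoc & Mid & Minv & M0 & Dist).
  intros l a b Hl E. destruct (Minv l Hl) as [m [Hm [Hlm Hml]]].
  rewrite <- (nf_mul1r a), <- (nf_mul1r b), <- Hlm, !nf_assoc, E. reflexivity.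
Qed.

End NF.

Theorem mainTheorem11 (F : Type) (addF mulF : F -> F -> F) (zeroF oneF : F)
  (K : Type) (vadd : K -> K -> K) (vzero : K) (mul : K -> K -> K) (one zero mone : K)
  (smul : K -> K -> K) :
  left_near_field addF mulF zeroF oneF ->
  elementary_nvs vadd vzero mul one zero mone smul addF mulF zeroF ->
  in_Q vadd smul one /\
  exists (phi : K -> F) (phiinv : F -> K),
    right_quasi_mult_bij mul one mulF zeroF oneF phi /\
    (forall a, phiinv (phi a) = a) /\ (forall x, phi (phiinv x) = x) /\
    (* alpha +_1 beta = phi^{-1}(phi alpha + phi beta) *)
    (forall a b, vadd (smul a one) (smul b one) = smul (phiinv (addF (phi a) (phi b))) one) /\
    left_near_field (fun a b => phiinv (addF (phi a) (phi b))) mul zero one.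
Proof.
  intros HF [HN [Psi [phi0 Hiso]]].
  destruct HN as (HS & Vassoc & Vcomm & V0 & Vinv & S1 & Smul & Sdist & Sneg & S0 & Sfree & Sgen).
  destruct HS as (Kassoc & Kid & K01 & K0 & Ksq & Knz & Kinv).
  destruct Hiso as (Padd & Pinj & Psurj & phnz & phmul & phinj & phsurj & Pcompat).
  pose proof HF as (Aassoc & Aid & Ainv & H10 & Mnz & Massoc & Mid & Minv & M0 & Dist).
  pose (vp := fun a => if excluded_middle_informative (a = zero) then zeroF else phi0 a).
  assert (vp0 : vp zero = zeroF).
  { unfold vp; destruct (excluded_middle_informative (zero = zero)); congruence. }
  assert (vpnz : forall a, a <> zero -> vp a = phi0 a).
  { intros a Ha; unfold vp; destruct (excluded_middle_informative (a = zero)); congruence. }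
  clearbody vp.
  assert (Psi0 : Psi vzero = zeroF).
  { apply (nf_addidem _ _ _ _ _ HF). rewrite <- Padd, V0. reflexivity. }
  assert (Pcomp : forall a u, Psi (smul a u) = mulF (vp a) (Psi u)).
  { intros a u. destruct (classic (a = zero)) as [Ha|Ha].
    - subst a. rewrite S0, Psi0, vp0, M0. reflexivity.
    - rewrite vpnz by exact Ha. apply Pcompat; exact Ha. }
  assert (vp_one : vp one = oneF).
  { assert (Ho : one <> zero) by (intro E; apply K01; symmetry; exact E).
    rewrite vpnz by exact Ho. apply (nf_idem _ _ _ _ _ HF).
    - apply phnz; exact Ho.
    - rewrite <- phmul by exact Ho. rewrite (proj1 (Kid one)). reflexivity. }
  assert (vp_mul : forall a b, vp (mul a b) = mulF (vp a) (vp b)).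
  { intros a b. destruct (classic (a = zero)) as [Ha|Ha].
    - subst a. rewrite (proj1 (K0 b)), vp0, M0. reflexivity.
    - destruct (classic (b = zero)) as [Hb|Hb].
      + subst b. rewrite (proj2 (K0 a)), vp0, (nf_mulx0 _ _ _ _ _ HF). reflexivity.
      + rewrite !vpnz by (try apply Knz; assumption). apply phmul; assumption. }
  assert (vp_inj : forall a b, vp a = vp b -> a = b).
  { intros a b E. destruct (classic (a = zero)) as [Ha|Ha];
      destruct (classic (b = zero)) as [Hb|Hb]; try (subst a; subst b; reflexivity).
    - subst a. rewrite vp0, vpnz in E by assumption. exfalso; apply (phnz b Hb); symmetry; exact E.
    - subst b. rewrite vp0, vpnz in E by assumption. exfalso; apply (phnz a Ha); exact E.
    - rewrite !vpnz in E by assumption. apply phinj; assumption. }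
  assert (vp_surj : forall c, exists a, vp a = c).
  { intros c. destruct (classic (c = zeroF)) as [Hc|Hc].
    - exists zero; rewrite vp0; symmetry; exact Hc.
    - destruct (phsurj c Hc) as [a [Ha E]]. exists a. rewrite vpnz by exact Ha. exact E. }
  assert (Hlam : exists lam, lam <> zeroF /\ (Psi one = zeroF \/ Psi one = lam)).
  { destruct (classic (Psi one = zeroF)) as [E|E].
    - exists oneF. split; [exact H10 | left; exact E].
    - exists (Psi one). split; [exact E | right; reflexivity]. }
  destruct Hlam as [lam [Hl HP]].
  pose (phi := fun a => mulF (vp a) lam).
  assert (phi_inj : forall a b, phi a = phi b -> a = b).
  { intros a b E. apply vp_inj. apply (nf_rcancel _ _ _ _ _ HF lam); assumption. }
  assert (phi_surj : forall c, exists a, phi a = c).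
  { intros c. destruct (Minv lam Hl) as [m [Hm [Hlm Hml]]].
    destruct (vp_surj (mulF c m)) as [a Ha]. exists a. unfold phi.
    rewrite Ha, <- (nf_assoc _ _ _ _ _ HF), Hml, (nf_mul1r _ _ _ _ _ HF). reflexivity. }
  pose (phiinv := fun x => proj1_sig (constructive_indefinite_description _ (phi_surj x))).
  assert (Hpi1 : forall x, phi (phiinv x) = x).
  { intros x. unfold phiinv. exact (proj2_sig (constructive_indefinite_description _ (phi_surj x))). }
  assert (Hpi2 : forall a, phiinv (phi a) = a).
  { intros a. apply phi_inj. apply Hpi1. }
  assert (phizero : phi zero = zeroF).
  { unfold phi. rewrite vp0, M0. reflexivity. }
  assert (phimul : forall c x, phi (mul c x) = mulF (vp c) (phi x)).
  { intros c x. unfold phi. rewrite vp_mul, (nf_assoc _ _ _ _ _ HF). reflexivity. }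
  assert (Hform : forall a b, vadd (smul a one) (smul b one) = smul (phiinv (addF (phi a) (phi b))) one).
  { intros a b. apply Pinj. rewrite Padd, !Pcomp. destruct HP as [HP|HP]; rewrite HP.
    - rewrite !(nf_mulx0 _ _ _ _ _ HF), (proj1 (Aid zeroF)). reflexivity.
    - change (addF (phi a) (phi b) = phi (phiinv (addF (phi a) (phi b)))).
      rewrite Hpi1. reflexivity. }
  split.
  { intros a b. exists (phiinv (addF (phi a) (phi b))). apply Hform. }
  exists phi, phiinv.
  split.
  { split; [exact phi_inj|]. split; [exact phi_surj|].
    exists vp, lam. split; [exact Hl|]. split; [exact vp_inj|]. split; [exact vp_surj|].
    split; [exact vp_one|]. split; [exact vp_mul|]. intros a; reflexivity. }
  split; [exact Hpi2|]. split; [exact Hpi1|]. split; [exact Hform|].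
  split.
  { intros a b c; cbv beta. rewrite !Hpi1, Aassoc. reflexivity. }
  split.
  { intros a; cbv beta. rewrite phizero, (proj1 (Aid _)), (proj2 (Aid _)), Hpi2. split; reflexivity. }
  split.
  { intros a. destruct (Ainv (phi a)) as [b [Hb1 Hb2]]. exists (phiinv b). cbv beta.
    rewrite Hpi1, Hb1, Hb2, <- phizero, Hpi2. split; reflexivity. }
  split; [intro E; apply K01; symmetry; exact E|].
  split; [exact Knz|].
  split; [intros a b c _ _ _; apply Kassoc|].
  split; [intros a _; apply Kid|].
  split; [intros a Ha; destruct (Kinv a Ha) as [b Hb]; exists b; exact Hb|].
  split; [intros a; apply (proj1 (K0 a))|].
  intros a b c; cbv beta. apply phi_inj. rewrite Hpi1, !phimul, Hpi1, Dist. reflexivity.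
Qed.
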